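(* Let $R$ be an associative $\mathbb C$-algebra, let $r_1,r_2,\dots\in R$ and $r'_1,r'_2,\dots\in R$ be two sequences, and let $M_j,N_j$ (entries $\alpha_{j;a,b},\beta_{j;a,b}$) and $M'_j,N'_j$ (entries $\alpha'_{j;a,b},\beta'_{j;a,b}$) be the matrices determined by the recursion below from $(r_j)$ and $(r'_j)$ respectively. (1) If $\lambda\in\mathbb C$ and $r'_j=\lambda^jr_j$ for all $j$, then $\alpha'_{j;a,b}=\lambda^{a-b+1}\alpha_{j;a,b}$ and $\beta'_{j;a,b}=\lambda^{a-b+1}\beta_{j;a,b}$ for all $j\ge a\ge b\ge1$. (2) If $r\mapsto r^*$ is an anti-automorphism of the $\mathbb C$-algebra $R$ and $r'_j=r_j^*$ for all $j$, then $\alpha'_{j;a,b}=(\beta_{j;j-b+1,j-a+1})^*$ and $\beta'_{j;a,b}=(\alpha_{j;j-b+1,j-a+1})^*$ for all $j\ge a\ge b\ge1$.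
   Context: Notation: $E^{[m]}$ is the $m\times m$ matrix over $R$ with $1_R$ on the superdiagonal and $0$ elsewhere; $F^{[m]}$ has entry $i(m-i)\cdot1_R$ in position $(i+1,i)$ for $1\le i\le m-1$ and $0$ elsewhere. Recursion: given $r_1,r_2,\dots\in R$, there are unique matrices $M_j$ ($j\times(j+1)$) and $N_j$ ($(j+1)\times j$) over $R$, $j\ge0$, such that: (A) $M_j$ has $(a,a+1)$ entry $1_R$, $(a,b)$ entry $\alpha_{j;a,b}$ for $b\le a$, and $0$ for $b>a+1$; $N_j$ has $(a,a)$ entry $1_R$ for $a\le j$, $(a+1,b)$ entry $\beta_{j;a,b}$ for $1\le b\le a\le j$, and $0$ for $b>a$ (so $M_0$, $N_0$ are the empty $0\times1$, $1\times0$ matrices); (B) for all $j\ge1$, $M_jN_j=N_{j-1}M_{j-1}+X_j$, where $X_j$ is the $j\times j$ matrix whose only nonzero entry is $r_j$ in the lower-left corner; (C) for all $j\ge1$, $N_jM_j-E^{[j+1]}$ commutes with $F^{[j+1]}$. *)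

(* Defs.v *)
From HB Require Import structures.
From mathcomp Require Import all_boot all_order all_algebra.
From mathcomp Require Import complex.
From mathcomp Require Import Rstruct.
Set Implicit Arguments. Unset Strict Implicit. Unset Printing Implicit Defensive.
Import Order.TTheory GRing.Theory Num.Theory.
Local Open Scope ring_scope.

Definition CC : fieldType := (Rdefinitions.R)[i].

Section Defs.
Variables (A : algType CC).

(* entry (i,k) of B with nat indices (0-based); 0 if out of range *)
Definition mxnat (m n : nat) (B : 'M[A]_(m, n)) (i k : nat) : A :=
  match (insub i : option 'I_m), (insub k : option 'I_n) with
  | Some i', Some k' => B i' k'
  | _, _ => 0
  end.

Definition Emx (m : nat) : 'M[A]_m :=
  \matrix_(i, k) (if (k : nat) == i.+1 then 1 else 0).

(* F^[m]: entry i(m-i) at 1-based position (i+1, i), 1 <= i <= m-1 *)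
Definition Fmx (m : nat) : 'M[A]_m :=
  \matrix_(i, k) (if (i : nat) == k.+1 then ((k.+1) * (m - k.+1))%:R else 0).

(* X_j (here of size n.+1 = j): c in the lower-left corner, 0 elsewhere *)
Definition Xmx (n : nat) (c : A) : 'M[A]_n.+1 :=
  \matrix_(i, k) (if (i == ord_max) && (k == ord0) then c else 0).

(* M, N satisfy conditions (A), (B), (C) of the recursion for the sequence r
   (r j is r_j; r 0 is unused).  Indices are 0-based in Rocq. *)
Definition recursion_MN (r : nat -> A)
    (M : forall j, 'M[A]_(j, j.+1)) (N : forall j, 'M[A]_(j.+1, j)) : Prop :=
  [/\
      (forall j (i : 'I_j) (k : 'I_j.+1),
          ((k : nat) == i.+1 -> M j i k = 1) /\ ((i.+1 < k)%N -> M j i k = 0)),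
      (forall j (i : 'I_j.+1) (k : 'I_j),
          ((k : nat) == i -> N j i k = 1) /\ ((i < k)%N -> N j i k = 0)),
      (* (B) M_j N_j = N_{j-1} M_{j-1} + X_j, j >= 1 *)
      (forall j, M j.+1 *m N j.+1 = N j *m M j + Xmx j (r j.+1))
    &
      (forall j, (0 < j)%N ->
          (N j *m M j - Emx j.+1) *m Fmx j.+1
          = Fmx j.+1 *m (N j *m M j - Emx j.+1))].

(* alpha_{j;a,b} = (a,b) entry of M_j, 1-based *)
Definition alpha (M : forall j, 'M[A]_(j, j.+1)) (j a b : nat) : A :=
  mxnat (M j) a.-1 b.-1.

(* beta_{j;a,b} = (a+1,b) entry of N_j, 1-based *)
Definition beta (N : forall j, 'M[A]_(j.+1, j)) (j a b : nat) : A :=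
  mxnat (N j) a b.-1.

Definition anti_automorphism (s : A -> A) : Prop :=
  [/\ forall x y, s (x + y) = s x + s y,
      forall (c : CC) x, s (c *: x) = c *: s x,
      forall x y, s (x * y) = s y * s x,
      s 1 = 1
    & bijective s].

End Defs.

(* Main.v *)
Require Import Defs.
From HB Require Import structures.
From mathcomp Require Import all_boot all_order all_algebra.
From mathcomp Require Import complex.
From mathcomp Require Import Rstruct.
From mathcomp Require Import zify.
Import Order.TTheory GRing.Theory Num.Theory.
Set Implicit Arguments. Unset Strict Implicit. Unset Printing Implicit Defensive.
Local Open Scope ring_scope.

Section Uniq.
Variable A : algType CC.

Lemma mxnatE m n (B : 'M[A]_(m,n)) (i : 'I_m) (k : 'I_n) :
  mxnat B i k = B i k.
Proof. by rewrite /mxnat !valK. Qed.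

Lemma mxnat_out m n (B : 'M[A]_(m,n)) i k :
  (m <= i)%N || (n <= k)%N -> mxnat B i k = 0.
Proof.
rewrite /mxnat; case: insubP => [i' Hi _|//]; case: insubP => [k' Hk _|//].
by rewrite leqNgt Hi leqNgt Hk.
Qed.

Lemma mxnat_in m n (B : 'M[A]_(m,n)) i k (Hi : (i < m)%N) (Hk : (k < n)%N) :
  mxnat B i k = B (Ordinal Hi) (Ordinal Hk).
Proof. by rewrite -mxnatE. Qed.

Lemma mxnat_mul m n p (B : 'M[A]_(m,n)) (C : 'M[A]_(n,p)) i k :
  mxnat (B *m C) i k = \sum_(b < n) mxnat B i b * mxnat C b k.
Proof.
case: (ltnP i m) => Hi; last first.
  by rewrite mxnat_out ?Hi // big1 // => b _; rewrite mxnat_out ?Hi ?mul0r.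
case: (ltnP k p) => Hk; last first.
  by rewrite mxnat_out ?Hk ?orbT // big1 // => b _; rewrite (mxnat_out C) ?Hk ?orbT ?mulr0.
rewrite mxnat_in mxE; apply: eq_bigr => b _.
by rewrite -(mxnatE B (Ordinal Hi) b) -(mxnatE C b (Ordinal Hk)).
Qed.

Lemma mxnatB m n (B C : 'M[A]_(m,n)) i k :
  mxnat (B - C) i k = mxnat B i k - mxnat C i k.
Proof.
case: (ltnP i m) => Hi; last by rewrite !mxnat_out ?Hi ?subr0.
case: (ltnP k n) => Hk; last by rewrite !mxnat_out ?Hk ?orbT ?subr0.
by rewrite !mxnat_in !mxE.
Qed.

Lemma sum_ind n c (u : A) :
  \sum_(b < n) (if (b : nat) == c then u else 0) = if (c < n)%N then u else 0.
Proof.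
case: (ltnP c n) => Hc.
  rewrite (bigD1 (Ordinal Hc)) //= eqxx big1 ?addr0 // => b Hb.
  case: eqP => // Hbc; case/eqP: Hb; exact: val_inj.
by rewrite big1 // => b _; case: eqP => // Hbc; move: (ltn_ord b); rewrite Hbc ltnNge Hc.
Qed.

Lemma mxnat_F n i k :
  mxnat (Fmx A n) i k =
  if (i < n)%N && (i == k.+1) then ((k.+1) * (n - k.+1))%:R else 0.
Proof.
case: (ltnP i n) => Hi /=; last by rewrite mxnat_out ?Hi.
case: (ltnP k n) => Hk; last first.
  rewrite mxnat_out ?Hk ?orbT //; case: eqP => // E; move: Hi; rewrite E; lia.
by rewrite mxnat_in mxE.
Qed.

Definition shM m (B : 'M[A]_(m, m.+1)) :=
  forall (i : 'I_m) (k : 'I_m.+1),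
    ((k : nat) == i.+1 -> B i k = 1) /\ ((i.+1 < k)%N -> B i k = 0).
Definition shN m (B : 'M[A]_(m.+1, m)) :=
  forall (i : 'I_m.+1) (k : 'I_m),
    ((k : nat) == i -> B i k = 1) /\ ((i < k)%N -> B i k = 0).

Lemma shM_nat m (B : 'M[A]_(m, m.+1)) i k : shM B -> (i < k)%N ->
  mxnat B i k = if (k == i.+1) && (i < m)%N then 1 else 0.
Proof.
move=> sh Hik; case: (ltnP i m) => Hi; last by rewrite mxnat_out ?Hi ?andbF.
case: (ltnP k m.+1) => Hk; last first.
  rewrite mxnat_out ?Hk ?orbT //; case: eqP => // E; move: Hk; rewrite E; lia.
rewrite mxnat_in andbT; case: eqP => E.
  by apply: (proj1 (sh _ _)); rewrite /= E.
by apply: (proj2 (sh _ _)); rewrite /=; lia.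
Qed.

Lemma shN_nat m (B : 'M[A]_(m.+1, m)) i k : shN B -> (i <= k)%N ->
  mxnat B i k = if (k == i) && (k < m)%N then 1 else 0.
Proof.
move=> sh Hik; case: (ltnP k m) => Hk; last by rewrite mxnat_out ?Hk ?orbT ?andbF.
have Hi : (i < m.+1)%N by lia.
rewrite mxnat_in andbT; case: eqP => E.
  by apply: (proj1 (sh _ _)); rewrite /= E.
by apply: (proj2 (sh _ _)); rewrite /=; lia.
Qed.


Definition commC m (P : 'M[A]_m.+1) :=
  (P - Emx A m.+1) *m Fmx A m.+1 = Fmx A m.+1 *m (P - Emx A m.+1).

Lemma zmod_aux (V : zmodType) (a b c d : V) : (a - c + d) - (b - c + d) = a - b.
Proof. by apply/eqP; rewrite subr_eq -!addrA addKr. Qed.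

Lemma commD m (P P' : 'M[A]_m.+1) : commC P -> commC P' ->
  (P - P') *m Fmx A m.+1 = Fmx A m.+1 *m (P - P').
Proof.
rewrite /commC !mulmxBl !mulmxBr => /eqP; rewrite subr_eq => /eqP e1.
move=> /eqP; rewrite subr_eq => /eqP e2.
by rewrite e1 e2 zmod_aux.
Qed.

Lemma natCC_neq0 n : (0 < n)%N -> (n%:R : CC) != 0.
Proof.
move=> H; have : (n%:R : (Rdefinitions.R)[i]) != 0 by rewrite pnatr_eq0 -lt0n.
exact.
Qed.

Fixpoint Gs (m d t : nat) : CC :=
  if t is t'.+1 then
    (((t' + d).+1 * (m - (t' + d)))%:R / ((t'.+1 * (m - t'))%:R)) * Gs m d t'
  else 1.

Lemma Gs_pos m d t : (t + d <= m)%N -> 0 < (Gs m d t : (Rdefinitions.R)[i]).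
Proof.
elim: t => [|t IH] Ht /=; first exact: ltr01.
apply: mulr_gt0; last by apply: IH; lia.
by apply: divr_gt0; rewrite ltr0n muln_gt0; apply/andP; split; lia.
Qed.

Lemma Gs_sum_pos m d t : (t + d <= m)%N ->
  0 < (\sum_(k < t.+1) Gs m d k : (Rdefinitions.R)[i]).
Proof.
elim: t => [|t IH] Ht; first by rewrite big_ord1; apply: Gs_pos => /=; lia.
rewrite big_ord_recr; apply: addr_gt0; first by apply: IH; lia.
exact: (@Gs_pos m d t.+1 Ht).
Qed.

Lemma step m (B B' : 'M[A]_(m,m.+1)) (C C' : 'M[A]_(m.+1,m)) d :
  shM B -> shM B' -> shN C -> shN C' -> B *m C = B' *m C' ->
  (C *m B - C' *m B') *m Fmx A m.+1 = Fmx A m.+1 *m (C *m B - C' *m B') ->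
  (forall i k, (i.+1 < k + d.+1)%N -> mxnat B i k = mxnat B' i k) ->
  (forall i k, (i < k + d.+1)%N -> mxnat C i k = mxnat C' i k) ->
  forall k, (k + d < m)%N -> mxnat B (k + d) k = mxnat B' (k + d) k /\
                            mxnat C (k + d).+1 k = mxnat C' (k + d).+1 k.
Proof.
move=> sB sB' sC sC' HQ HD aB aC.
pose u k := mxnat B (k + d) k - mxnat B' (k + d) k.
pose v k := mxnat C (k + d).+1 k - mxnat C' (k + d).+1 k.
pose D := C *m B - C' *m B'.
pose dl k := mxnat D (k + d) k.
have termQ : forall b k, (k + d < m)%N ->
    (if b == k then u k else 0) + (if b == (k + d).+1 then v k else 0) =
    mxnat B (k + d) b * mxnat C b k - mxnat B' (k + d) b * mxnat C' b k.
  move=> b k Hk; case: (ltngtP b k) => [Hbk|Hbk|->].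
  - rewrite (shN_nat sC) ?(shN_nat sC') ?(ltnW Hbk) //.
    have -> : (k == b) = false by lia.
    have -> : (b == (k + d).+1) = false by lia.
    by rewrite /= !mulr0 subrr addr0.
  - case: (ltngtP b (k + d).+1) => [Hb2|Hb2|->].
    + idtac.
      rewrite aB ?aC; try lia.
      by rewrite subrr addr0.
    + idtac.
      rewrite (shM_nat sB) ?(shM_nat sB'); try lia.
      have -> : (b == (k + d).+1) = false by lia.
      by rewrite /= !mul0r subrr addr0.
    + rewrite (shM_nat sB) ?(shM_nat sB') //.
      by rewrite eqxx Hk /= !mul1r add0r.
  - rewrite (shN_nat sC) ?(shN_nat sC') // ?eqxx.
    have -> : (k < m)%N by lia.
    have -> : (k == (k + d).+1) = false by lia.
    by rewrite /= !mulr1 addr0.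
have Quv : forall k, (k + d < m)%N -> u k + v k = 0.
  move=> k Hk.
  have := congr1 (fun X => mxnat X (k + d) k) HQ; rewrite /= !mxnat_mul => /eqP.
  rewrite -subr_eq0 -sumrB => /eqP <-.
  have -> : u k + v k = \sum_(b < m.+1) ((if (b : nat) == k then u k else 0)
                 + (if (b : nat) == (k + d).+1 then v k else 0)).
    rewrite big_split /= !sum_ind.
    have -> : (k < m.+1)%N by lia.
    by have -> : ((k + d).+1 < m.+1)%N by lia.
  by apply: eq_bigr => b _; apply: termQ.
have termP : forall b k, (b < m)%N -> (k + d <= m)%N ->
    (if b == (k + d)%N then u k else 0) +
    (if b == k.-1 then (if (0 < k)%N then v k.-1 else 0) else 0) =
    mxnat C (k + d) b * mxnat B b k - mxnat C' (k + d) b * mxnat B' b k.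
  move=> b [|k] Hb Hk /=.
  - rewrite if_same addr0 add0n.
    case: (ltngtP b d) Hb => [Hbd|Hbd|->] Hb.
    + by rewrite aB ?aC ?subrr //; lia.
    + rewrite (shN_nat sC) ?(shN_nat sC'); try lia.
      have -> : (b == d) = false by lia.
      by rewrite /= !mul0r subrr.
    + rewrite (shN_nat sC) ?(shN_nat sC') // eqxx.
      have -> : (d < m)%N by lia.
      by rewrite /= !mul1r /u add0n.
  - case: (ltngtP b k) => [Hbk|Hbk|->].
    + have -> : (b == k.+1 + d) = false by lia.
      rewrite (shM_nat sB) ?(shM_nat sB'); try lia.
      have -> : (k.+1 == b.+1) = false by lia.
      by rewrite /= !mulr0 subrr addr0.
    + case: (ltngtP b (k.+1 + d)) Hb => [Hb2|Hb2|->] Hb.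
      * by rewrite aB ?aC ?subrr ?addr0 //; lia.
      * rewrite (shN_nat sC) ?(shN_nat sC'); try lia.
        have -> : (b == k.+1 + d) = false by lia.
        by rewrite /= !mul0r subrr addr0.
      * rewrite (shN_nat sC) ?(shN_nat sC') // eqxx.
        have -> : (k.+1 + d < m)%N by lia.
        rewrite /= !mul1r.
        by rewrite addr0.
    + rewrite (shM_nat sB) ?(shM_nat sB') // eqxx.
      have -> : (k < m)%N by lia.
      have -> : (k == k.+1 + d) = false by lia.
      by rewrite /= !mulr1 add0r /v addSn.
have dlform : forall k, (k + d <= m)%N ->
    dl k = (if (k + d < m)%N then u k else 0) +
           (if (k.-1 < m)%N then (if (0 < k)%N then v k.-1 else 0) else 0).
  move=> k Hk; rewrite /dl /D mxnatB !mxnat_mul -sumrB.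
  transitivity (\sum_(b < m) ((if (b : nat) == (k + d)%N then u k else 0) +
    (if (b : nat) == k.-1 then (if (0 < k)%N then v k.-1 else 0) else 0))).
    by apply: eq_bigr => b _; rewrite termP.
  by rewrite big_split /= !sum_ind.
have rel : forall k, (k + d < m)%N ->
    dl k.+1 * ((k.+1 * (m - k))%:R) = ((k + d).+1 * (m - (k + d)))%:R * dl k.
  move=> k Hk.
  have e1 : \sum_(b < m.+1) mxnat D (k + d).+1 b * mxnat (Fmx A m.+1) b k
            = dl k.+1 * ((k.+1 * (m - k))%:R).
    rewrite (eq_bigr (fun b : 'I_m.+1 => if (b : nat) == k.+1
               then dl k.+1 * ((k.+1 * (m - k))%:R) else 0)).
      by rewrite sum_ind; have -> : (k.+1 < m.+1)%N by lia.
    move=> b _; rewrite mxnat_F ltn_ord /=; case: eqP => [->|]; last by rewrite mulr0.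
    by rewrite /dl addSn subSS.
  have e2 : \sum_(b < m.+1) mxnat (Fmx A m.+1) (k + d).+1 b * mxnat D b k
            = ((k + d).+1 * (m - (k + d)))%:R * dl k.
    rewrite (eq_bigr (fun b : 'I_m.+1 => if (b : nat) == (k + d)%N
               then ((k + d).+1 * (m - (k + d)))%:R * dl k else 0)).
      by rewrite sum_ind; have -> : ((k + d)%N < m.+1)%N by lia.
    move=> b _; rewrite mxnat_F.
    have -> : ((k + d).+1 < m.+1)%N by lia.
    rewrite /= eqSS [(k + d == _)]eq_sym; case: eqP => [->|]; last by rewrite mul0r.
    by rewrite subSS.
  have := congr1 (fun X => mxnat X (k + d).+1 k) HD; rewrite /= !mxnat_mul.
  by move=> H; rewrite -e1 -e2; exact: H.
have dl_G : forall t, (t + d <= m)%N -> dl t = Gs m d t *: dl 0.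
  elim=> [|t IH] Ht; first by rewrite /= scale1r.
  have Ht' : (t + d < m)%N by lia.
  have := rel t Ht'; rewrite mulr_natr mulr_natl -!(@scaler_nat CC A) => e.
  have Hc : ((t.+1 * (m - t))%:R : CC) != 0.
    by apply: natCC_neq0; rewrite muln_gt0; apply/andP; split; lia.
  rewrite /= -scalerA -IH; last by lia.
  transitivity ((((t.+1 * (m - t))%:R : CC)^-1 * (t.+1 * (m - t))%:R) *: dl t.+1).
    by rewrite mulVf // scale1r.
  by rewrite -scalerA e scalerA mulrC.
have sumS : forall t, (t + d <= m)%N ->
    \sum_(k < t.+1) dl k = if (t + d < m)%N then u t else 0.
  elim=> [|t IH] Ht.
    by rewrite big_ord1 dlform //= if_same addr0.
  rewrite big_ord_recr /= IH; last by lia.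
  rewrite dlform //=.
  have -> : (t + d < m)%N by lia.
  have -> : (t < m)%N by lia.
  by rewrite addrCA Quv ?addr0 //; lia.
move=> k0 Hk0.
pose t0 := (m - d)%N.
have Ht0 : (t0 + d <= m)%N by rewrite /t0; lia.
have S0 := sumS t0 Ht0.
have Ef : (t0 + d < m)%N = false by rewrite /t0; lia.
rewrite Ef in S0.
rewrite (eq_bigr (fun k : 'I_t0.+1 => Gs m d k *: dl 0)) in S0; last first.
  by move=> k _; apply: dl_G; have := ltn_ord k; lia.
rewrite -scaler_suml in S0.
have dl0 : dl 0 = 0.
  move/eqP: S0; rewrite scaler_eq0 => /orP [H|/eqP //].
  have Hp := Gs_sum_pos Ht0.
  have : (\sum_(k < t0.+1) Gs m d k : (Rdefinitions.R)[i]) != 0 by rewrite gt_eqF.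
  by rewrite H.
have dlz : forall k, (k + d <= m)%N -> dl k = 0.
  by move=> k Hk; rewrite dl_G // dl0 scaler0.
have uz : forall k, (k + d < m)%N -> u k = 0 /\ v k = 0.
  elim=> [|k IH] Hk.
    have := dlform 0 (ltnW Hk); rewrite dlz ?(ltnW Hk) //= if_same addr0 Hk => /esym u0.
    split=> //; have := Quv 0 Hk; by rewrite u0 add0r.
  have [_ vk] := IH (ltnW Hk).
  have := dlform k.+1 (ltnW Hk); rewrite dlz ?(ltnW Hk) //= Hk vk if_same addr0.
  move=> /esym uk; split=> //; have := Quv k.+1 Hk; by rewrite uk add0r.
have [uk vk] := uz k0 Hk0.
by split; apply/eqP; rewrite -subr_eq0; apply/eqP.
Qed.

Lemma core m (B B' : 'M[A]_(m,m.+1)) (C C' : 'M[A]_(m.+1,m)) :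
  shM B -> shM B' -> shN C -> shN C' -> B *m C = B' *m C' ->
  commC (C *m B) -> commC (C' *m B') -> B = B' /\ C = C'.
Proof.
move=> sB sB' sC sC' HQ c1 c2.
have HD := commD c1 c2.
have agree : forall w,
    (forall i k, (i.+1 < k + w.+1)%N -> mxnat B i k = mxnat B' i k) /\
    (forall i k, (i < k + w.+1)%N -> mxnat C i k = mxnat C' i k).
  elim=> [|d [IB IC]].
    split=> i k H.
      by rewrite (shM_nat sB) ?(shM_nat sB') //; lia.
    by rewrite (shN_nat sC) ?(shN_nat sC') //; lia.
  have St := step sB sB' sC sC' HQ HD IB IC.
  split=> i k H.
    case: (ltnP i.+1 (k + d.+1)) => H2; first exact: IB.
    have Ei : i = (k + d)%N by lia.
    case: (ltnP (k + d) m) => H3; first by rewrite Ei; case: (St k H3).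
    by rewrite !mxnat_out //; apply/orP; left; lia.
  case: (ltnP i (k + d.+1)) => H2; first exact: IC.
  have Ei : i = (k + d).+1 by lia.
  case: (ltnP (k + d) m) => H3; first by rewrite Ei; case: (St k H3).
  by rewrite !mxnat_out //; apply/orP; left; lia.
have [aB aC] := agree m.
split; apply/matrixP => i k; rewrite -!mxnatE.
  by apply: aB; have := ltn_ord i; lia.
by apply: aC; have := ltn_ord i; lia.
Qed.

Lemma uniq_rec (r : nat -> A) M N M' N' :
  recursion_MN r M N -> recursion_MN r M' N' ->
  forall j, M j = M' j /\ N j = N' j.
Proof.
case=> shMa shNa Ba Ca [shMb shNb Bb Cb].
elim=> [|j [IHM IHN]].
  split; apply/matrixP; [by move=> [i Hi] | by move=> i [k Hk]].
apply: core.
- exact: (shMa j.+1).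
- exact: (shMb j.+1).
- exact: (shNa j.+1).
- exact: (shNb j.+1).
- by rewrite Ba Bb IHM IHN.
- exact: Ca.
- exact: Cb.
Qed.

Lemma mxnat_mx p q (f : 'I_p -> 'I_q -> A) i k (Hi : (i < p)%N) (Hk : (k < q)%N) :
  mxnat (\matrix_(i, k) f i k) i k = f (Ordinal Hi) (Ordinal Hk).
Proof. by rewrite mxnat_in mxE. Qed.

Lemma scaled_mul p q t (l : CC) (B : 'M[A]_(p,q)) (C : 'M[A]_(q,t))
    (eB eC e : nat -> nat -> nat) :
  (forall (i : 'I_p) (b : 'I_q) (k : 'I_t),
      B i b * C b k = 0 \/ (eB i b + eC b k = e i k)%N) ->
  (\matrix_(i, k) (l ^+ eB i k *: B i k)) *m (\matrix_(i, k) (l ^+ eC i k *: C i k))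
  = \matrix_(i, k) (l ^+ e i k *: (B *m C) i k).
Proof.
move=> H; apply/matrixP => i k; rewrite !mxE scaler_sumr; apply: eq_bigr => b _.
rewrite !mxE -scalerAl -scalerAr scalerA -exprD.
by case: (H i b k) => [->|->]; rewrite ?scaler0.
Qed.

Lemma part1 (r r' : nat -> A) M N (l : CC) :
  recursion_MN r M N -> (forall j, (0 < j)%N -> r' j = l ^+ j *: r j) ->
  recursion_MN r' (fun j => \matrix_(i, k) (l ^+ (i.+1 - k) *: M j i k))
                  (fun j => \matrix_(i, k) (l ^+ (i - k) *: N j i k)).
Proof.
case=> shMa shNa Ba Ca Hr.
have NM : forall j, (\matrix_(i, k) (l ^+ (i - k) *: N j i k)) *m
                    (\matrix_(i, k) (l ^+ (i.+1 - k) *: M j i k)) =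
                    \matrix_(i, k) (l ^+ (i.+1 - k) *: (N j *m M j) i k).
  move=> j. have := @scaled_mul _ _ _ l (N j) (M j) (fun i k => (i - k)%N)
     (fun i k => (i.+1 - k)%N) (fun i k => (i.+1 - k)%N). move=> H. refine (H _) => i b k.
  case: (ltnP (i : nat) b) => H1.
    by left; rewrite (proj2 (shNa _ _ _) H1) mul0r.
  case: (ltnP b.+1 k) => H2.
    by left; rewrite (proj2 (shMa _ _ _) H2) mulr0.
  by right; lia.
have MN : forall j, (\matrix_(i, k) (l ^+ (i.+1 - k) *: M j i k)) *m
                    (\matrix_(i, k) (l ^+ (i - k) *: N j i k)) =
                    \matrix_(i, k) (l ^+ (i.+1 - k) *: (M j *m N j) i k).
  move=> j. have := @scaled_mul _ _ _ l (M j) (N j) (fun i k => (i.+1 - k)%N)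
     (fun i k => (i - k)%N) (fun i k => (i.+1 - k)%N). move=> H. refine (H _) => i b k.
  case: (ltnP (i : nat).+1 b) => H1.
    by left; rewrite (proj2 (shMa _ _ _) H1) mul0r.
  case: (ltnP (b : nat) k) => H2.
    by left; rewrite (proj2 (shNa _ _ _) H2) mulr0.
  by right; lia.
split.
- move=> j i k; rewrite !mxE; split.
    move=> E; rewrite (proj1 (shMa _ _ _) E) (eqP E) subnn expr0 scale1r //.
  by move=> E; rewrite (proj2 (shMa _ _ _) E) scaler0.
- move=> j i k; rewrite !mxE; split.
    move=> E; rewrite (proj1 (shNa _ _ _) E) (eqP E) subnn expr0 scale1r //.
  by move=> E; rewrite (proj2 (shNa _ _ _) E) scaler0.
- move=> j; rewrite MN NM Ba; apply/matrixP => i k; rewrite !mxE scalerDr.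
  congr (_ + _).
  case: andP => [[/eqP -> /eqP ->]|_]; last by rewrite scaler0.
  by rewrite /= subn0 Hr.
- move=> j Hj.
  have LE : \matrix_(i, k) (l ^+ (i.+1 - k) *: (N j *m M j) i k) - Emx A j.+1 =
            \matrix_(i, k) (l ^+ (i.+1 - k) *: (N j *m M j - Emx A j.+1) i k).
    apply/matrixP => i k; rewrite !mxE scalerBr; congr (_ - _).
    by case: eqP => [->|_]; rewrite ?subnn ?expr0 ?scale1r ?scaler0.
  have FE : Fmx A j.+1 = \matrix_(i, k) (l ^+ 0 *: Fmx A j.+1 i k).
    by apply/matrixP => i k; rewrite !mxE expr0 scale1r.
  rewrite NM LE FE.
  rewrite (@scaled_mul _ _ _ l _ _ (fun i k => (i.+1 - k)%N) (fun _ _ => 0%N)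
      (fun i k => (i - k)%N)); last first.
    move=> i b k; rewrite [Fmx _ _ b k]mxE.
    case: eqP => [->|_]; last by left; rewrite mulr0.
    by right; lia.
  rewrite (@scaled_mul _ _ _ l _ _ (fun _ _ => 0%N) (fun i k => (i.+1 - k)%N)
      (fun i k => (i - k)%N)); last first.
    move=> i b k; rewrite [Fmx _ _ i b]mxE.
    case: eqP => [->|_]; last by left; rewrite mul0r.
    by right; lia.
  by rewrite (Ca j Hj).
Qed.

Definition flip (s : A -> A) p q (B : 'M[A]_(p,q)) : 'M[A]_(q,p) :=
  \matrix_(i, k) s (B (rev_ord k) (rev_ord i)).

Lemma part2 (r r' : nat -> A) M N (s : A -> A) :
  recursion_MN r M N -> anti_automorphism s ->
  (forall j, (0 < j)%N -> r' j = s (r j)) ->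
  recursion_MN r' (fun j => flip s (N j)) (fun j => flip s (M j)).
Proof.
case=> shMa shNa Ba Ca [sD sZ sM s1 _] Hr.
have s0 : s 0 = 0 by have := sZ 0 0; rewrite !scale0r.
have sN : forall x, s (- x) = - s x by move=> x; have := sZ (-1) x; rewrite !scaleN1r.
have sB : forall x y, s (x - y) = s x - s y by move=> x y; rewrite sD sN.
have sS : forall n (F : 'I_n -> A), s (\sum_(i < n) F i) = \sum_(i < n) s (F i).
  by move=> n F; apply: (big_morph s sD s0).
have fmul : forall p q t (B : 'M[A]_(p,q)) (C : 'M[A]_(q,t)),
    flip s (B *m C) = flip s C *m flip s B.
  move=> p q t B C; apply/matrixP => i k; rewrite !mxE sS.
  rewrite (reindex_inj rev_ord_inj); apply: eq_bigr => b _.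
  by rewrite !mxE sM.
have fD : forall p q (B C : 'M[A]_(p,q)), flip s (B + C) = flip s B + flip s C.
  by move=> p q B C; apply/matrixP => i k; rewrite !mxE sD.
have fB : forall p q (B C : 'M[A]_(p,q)), flip s (B - C) = flip s B - flip s C.
  by move=> p q B C; apply/matrixP => i k; rewrite !mxE sB.
have fE : forall n, flip s (Emx A n) = Emx A n.
  move=> n; apply/matrixP => i k; rewrite !mxE /=.
  have Hi := ltn_ord i; have Hk := ltn_ord k.
  have -> : ((n - i.+1)%N == (n - k.+1).+1) = ((k : nat) == i.+1) by lia.
  by case: ifP.
have fF : forall n, flip s (Fmx A n) = Fmx A n.
  move=> n; apply/matrixP => i k; rewrite !mxE /=.
  have Hi := ltn_ord i; have Hk := ltn_ord k.
  have -> : ((n - k.+1)%N == (n - i.+1).+1) = ((i : nat) == k.+1) by lia.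
  case: eqP => [Ei|_]; last by [].
  have e1 : (n - i.+1).+1 = (n - k.+1)%N by lia.
  have e2 : (n - (n - i.+1).+1)%N = k.+1 by lia.
  transitivity (s ((k.+1 * (n - k.+1))%:R)); first by congr (s _%:R); rewrite mulnC; congr (_ * _)%N; lia.
  have := sZ ((k.+1 * (n - k.+1))%:R) 1.
  by rewrite s1 !scaler_nat.
have fX : forall j c, flip s (Xmx j c) = Xmx j (s c).
  move=> j c; apply/matrixP => i k; rewrite !mxE.
  have Hi := ltn_ord i; have Hk := ltn_ord k.
  have -> : (rev_ord k == ord_max) = (k == ord0) by rewrite -!val_eqE /=; lia.
  have -> : (rev_ord i == ord0) = (i == ord_max) by rewrite -!val_eqE /=; lia.
  by rewrite andbC; case: ifP.
split.
- move=> j i k; rewrite !mxE; split.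
    move=> E; rewrite (proj1 (shNa _ _ _)) ?s1 //=; have := ltn_ord i; lia.
  move=> E; rewrite (proj2 (shNa _ _ _)) ?s0 //= ; have := ltn_ord k; lia.
- move=> j i k; rewrite !mxE; split.
    move=> E; rewrite (proj1 (shMa _ _ _)) ?s1 //= ; have := ltn_ord k; lia.
  move=> E; rewrite (proj2 (shMa _ _ _)) ?s0 //=; have := ltn_ord k; lia.
- move=> j; rewrite -fmul Ba fD fmul fX Hr //.
- move=> j Hj; rewrite -fmul -(fE j.+1) -fB -(fF j.+1) -!fmul.
  by rewrite (Ca j Hj).
Qed.

End Uniq.

Theorem lemma4p7 (A : algType CC) (r r' : nat -> A)
    (M : forall j, 'M[A]_(j, j.+1)) (N : forall j, 'M[A]_(j.+1, j))
    (M' : forall j, 'M[A]_(j, j.+1)) (N' : forall j, 'M[A]_(j.+1, j)) :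
  recursion_MN r M N -> recursion_MN r' M' N' ->
  (forall lambda : CC,
     (forall j, (0 < j)%N -> r' j = lambda ^+ j *: r j) ->
     forall j a b, (1 <= b)%N -> (b <= a)%N -> (a <= j)%N ->
       alpha M' j a b = lambda ^+ (a - b + 1) *: alpha M j a b /\
       beta N' j a b = lambda ^+ (a - b + 1) *: beta N j a b) /\
  (forall s : A -> A, anti_automorphism s ->
     (forall j, (0 < j)%N -> r' j = s (r j)) ->
     forall j a b, (1 <= b)%N -> (b <= a)%N -> (a <= j)%N ->
       alpha M' j a b = s (beta N j (j - b + 1) (j - a + 1)) /\
       beta N' j a b = s (alpha M j (j - b + 1) (j - a + 1))).
Proof.
move=> HM HM'; split.
- move=> l Hr j a b Hb Hba Haj.
  have HR := part1 HM Hr.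
  have [E1 E2] := uniq_rec HM' HR j.
  have Ha1 : (a.-1 < j)%N by lia.
  have Hb1 : (b.-1 < j.+1)%N by lia.
  have Ha2 : (a < j.+1)%N by lia.
  have Hb2 : (b.-1 < j)%N by lia.
  rewrite /alpha /beta E1 E2 (mxnat_mx _ Ha1 Hb1) (mxnat_mx _ Ha2 Hb2).
  rewrite (mxnat_in (M j) Ha1 Hb1) (mxnat_in (N j) Ha2 Hb2) /=.
  by split; congr (_ ^+ _ *: _); lia.
- move=> s Hs Hr j a b Hb Hba Haj.
  have HR := part2 HM Hs Hr.
  have [E1 E2] := uniq_rec HM' HR j.
  have Ha1 : (a.-1 < j)%N by lia.
  have Hb1 : (b.-1 < j.+1)%N by lia.
  have Ha2 : (a < j.+1)%N by lia.
  have Hb2 : (b.-1 < j)%N by lia.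
  rewrite /alpha /beta E1 E2 /flip (mxnat_mx _ Ha1 Hb1) (mxnat_mx _ Ha2 Hb2).
  split; congr (s _).
  + have H1 : (j - b + 1 < j.+1)%N by lia.
    have H2 : ((j - a + 1).-1 < j)%N by lia.
    rewrite (mxnat_in (N j) H1 H2); congr (N j _ _); apply: val_inj => /=; lia.
  + have H1 : ((j - b + 1).-1 < j)%N by lia.
    have H2 : ((j - a + 1).-1 < j.+1)%N by lia.
    rewrite (mxnat_in (M j) H1 H2); congr (M j _ _); apply: val_inj => /=; lia.
Qed.
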